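(* Let $n\in\mathbb{N}$, $n\geq 1$. For each $k\in\{0,1,2,\ldots,n^2\}$ there exists a polyanalytic polynomial of degree $n$ with exactly $k$ distinct zeros, and there exists a polyanalytic polynomial of degree $n$ with infinitely many zeros.
   Context: A polyanalytic polynomial is a function $\mathbb{C}\to\mathbb{C}$ of the form $P(z,\bar z)=\sum_{j+k\le n}\alpha_{j,k} z^j \bar z^{k}$ with complex coefficients (a polynomial in $z$ and $\bar z$). Its degree is the largest $j+k$ with $\alpha_{j,k}\neq 0$. A zero of $P$ is a point $z\in\mathbb{C}$ with $P(z,\bar z)=0$. *)

(* Defs.v *)
From HB Require Import structures.
From mathcomp Require Import all_boot all_order all_algebra.
From mathcomp Require Import complex.
From mathcomp Require Import Rstruct.
From Stdlib Require Rdefinitions.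
Set Implicit Arguments. Unset Strict Implicit. Unset Printing Implicit Defensive.
Import Order.TTheory GRing.Theory Num.Theory.
Local Open Scope ring_scope.

Definition C : Type := (Rdefinitions.R)[i].

Definition polyan_sum (n : nat) (a : nat -> nat -> C) (z : C) : C :=
  \sum_(j < n.+1) \sum_(k < n.+1 | ((j : nat) + (k : nat) <= n)%N)
     a j k * z ^+ j * (z^*)%C ^+ k.

Definition polyanalytic_of_degree (n : nat) (P : C -> C) : Prop :=
  exists a : nat -> nat -> C,
    (forall z, P z = polyan_sum n a z) /\
    (exists j k : nat, (j + k)%N = n /\ a j k != 0).

Definition has_exactly_zeros (P : C -> C) (m : nat) : Prop :=
  exists s : seq C, uniq s /\ size s = m /\ (forall z, P z = 0 <-> z \in s).

Definition has_infinitely_many_zeros (P : C -> C) : Prop :=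
  forall s : seq C, exists z, P z = 0 /\ z \notin s.

(* Main.v *)
Require Import Defs.
From mathcomp Require Import all_boot all_order all_algebra.
From mathcomp Require Import complex Rstruct.
From mathcomp Require Import zify.
From mathcomp.algebra_tactics Require Import ring.
Set Implicit Arguments. Unset Strict Implicit. Unset Printing Implicit Defensive.
Import Order.TTheory GRing.Theory Num.Theory.
Local Open Scope ring_scope.

Definition PP := {poly {poly C}}.

Lemma cfu (z : C) : commr_rmorph (horner_eval z) (z^*)%C.
Proof. by move=> a; rewrite /GRing.comm mulrC. Qed.

Definition ev (z : C) : PP -> C := horner_morph (cfu z).

Lemma evZ z : ev z ('X%:P) = z.
Proof. rewrite /ev horner_morphC; exact: hornerX. Qed.
Lemma evY z : ev z 'X = (z^*)%C.
Proof. by rewrite /ev horner_morphX. Qed.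
Lemma evC z c : ev z (c%:P%:P) = c.
Proof. rewrite /ev horner_morphC; exact: hornerC. Qed.
Lemma evM z p q : ev z (p * q) = ev z p * ev z q.
Proof. by rewrite /ev rmorphM. Qed.

Definition deg_le (m : nat) (Q : PP) :=
  forall j k, (m < j + k)%N -> (Q`_k)`_j = 0.
Definition top (m : nat) (Q : PP) := (Q`_0)`_m.

Lemma deg_le_mono m m' Q : (m <= m')%N -> deg_le m Q -> deg_le m' Q.
Proof. by move=> hm h j k hjk; apply: h; lia. Qed.

Lemma deg_leD m P Q : deg_le m P -> deg_le m Q -> deg_le m (P + Q).
Proof. by move=> hP hQ j k hjk; rewrite !coefD hP // hQ // addr0. Qed.

Lemma deg_leN m P : deg_le m P -> deg_le m (- P).
Proof. by move=> hP j k hjk; rewrite !coefN hP // oppr0. Qed.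

Lemma deg_leB m P Q : deg_le m P -> deg_le m Q -> deg_le m (P - Q).
Proof. by move=> hP hQ; apply: deg_leD => //; apply: deg_leN. Qed.

Lemma deg_leC c : deg_le 0 (c%:P%:P).
Proof.
move=> j k hjk; rewrite coefC; case: eqP => [hk|_]; last by rewrite coef0.
by rewrite coefC; case: eqP => // hj; lia.
Qed.

Lemma deg_le_nat i : deg_le 0 (i%:R).
Proof. have -> : (i%:R : PP) = (i%:R : C)%:P%:P by rewrite !rmorph_nat.
exact: deg_leC. Qed.

Lemma deg_leZ : deg_le 1 ('X%:P).
Proof.
move=> j k hjk; rewrite coefC; case: eqP => [hk|_]; last by rewrite coef0.
by rewrite coefX; case: eqP => // hj; lia.
Qed.

Lemma deg_leY : deg_le 1 'X.
Proof.
move=> j k hjk; rewrite coefX; case: eqP => [hk|_]; last by rewrite coef0.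
by rewrite coefC; case: eqP => // hj; lia.
Qed.

Lemma deg_leM m l P Q : deg_le m P -> deg_le l Q -> deg_le (m + l) (P * Q).
Proof.
move=> hP hQ j k hjk; rewrite coefM coef_sum big1 // => i _.
rewrite coefM big1 // => i' _.
have hi := ltn_ord i; have hi' := ltn_ord i'.
case: (ltnP m (i' + i)) => h; first by rewrite hP // mul0r.
by rewrite hQ ?mulr0 //; lia.
Qed.

Lemma topD m P Q : top m (P + Q) = top m P + top m Q.
Proof. by rewrite /top !coefD. Qed.
Lemma topB m P Q : top m (P - Q) = top m P - top m Q.
Proof. by rewrite /top !coefB. Qed.
Lemma topCM m c P : top m (c%:P%:P * P) = c * top m P.
Proof. by rewrite /top !coefCM. Qed.

Lemma topM m l P Q : deg_le m P -> deg_le l Q ->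
  top (m + l) (P * Q) = top m P * top l Q.
Proof.
move=> hP hQ; rewrite /top coef0M coefM.
have hm : (m < (m + l).+1)%N by lia.
rewrite (bigD1 (Ordinal hm)) //= big1 ?addr0; first by rewrite addKn.
move=> i /eqP hi; have hi' := ltn_ord i.
case: (ltnP m i) => h; first by rewrite hP ?mul0r //; lia.
have h2 : i <> m :> nat by move=> e; apply: hi; apply: val_inj.
by rewrite hQ ?mulr0 //; lia.
Qed.

Lemma deg_le_prod (s : seq nat) (G : nat -> PP) :
  (forall j, deg_le 1 (G j)) ->
  deg_le (size s) (\prod_(j <- s) G j) /\
  top (size s) (\prod_(j <- s) G j) = \prod_(j <- s) top 1 (G j).
Proof.
move=> hG; elim: s => [|a s [IH1 IH2]].
  rewrite !big_nil; have -> : (1 : PP) = (1 : C)%:P%:P by [].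
  by split; [apply: deg_leC | rewrite /top !coefC].
rewrite !big_cons /=; split; first by rewrite -add1n; apply: deg_leM.
by rewrite -add1n topM // IH2.
Qed.

Lemma polyan_of (n : nat) (Q : PP) :
  deg_le n Q -> top n Q != 0 -> polyanalytic_of_degree n (fun z => ev z Q).
Proof.
move=> hQ htop; exists (fun j k => (Q`_k)`_j); split; last by exists n, 0%N; rewrite addn0.
move=> z; rewrite /ev /horner_morph.
have hk : forall k, (n < k)%N -> Q`_k = 0.
  by move=> k hk; apply/polyP => j; rewrite coef0 hQ //; lia.
rewrite (@horner_coef_wide _ n.+1); last first.
  by apply/leq_sizeP => i hi; rewrite coef_map hk //; exact: horner0.
rewrite /polyan_sum.
transitivity (\sum_(k < n.+1) \sum_(j < n.+1) (Q`_k)`_j * z ^+ j * (z^*)%C ^+ k).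
  apply: eq_bigr => k _; rewrite coef_map; change (horner_eval z (Q`_k)) with (Q`_k).[z].
  rewrite [X in X * _](_ : _ = (Q`_k).[z]) //.
  rewrite (@horner_coef_wide _ n.+1) ?big_distrl //.
  by apply/leq_sizeP => j hj; apply: hQ; lia.
rewrite exchange_big /=; apply: eq_bigr => j _.
rewrite [RHS]big_mkcond /=; apply: eq_bigr => k _.
by case: ifP => // h; rewrite hQ ?mul0r //; lia.
Qed.

Definition ZQ : PP := 'X%:P.
Definition YbQ : PP := 'X.
Definition XQ : PP := (2^-1 : C)%:P%:P * (ZQ + YbQ).
Definition YQ : PP := ((2^-1 * 'i%C) : C)%:P%:P * (YbQ - ZQ).

Lemma evXQ z : ev z XQ = (complex.Re z)%:C%C.
Proof.
rewrite ReJ_add /XQ evM evC /ev rmorphD /= -/(ev z _) -/(ev z _).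
by rewrite /ZQ /YbQ evZ evY mulrC.
Qed.

Lemma evYQ z : ev z YQ = (complex.Im z)%:C%C.
Proof.
rewrite ImJ_sub /YQ evM evC /ev rmorphB /= -/(ev z _) -/(ev z _).
by rewrite /ZQ /YbQ evZ evY mulrC mulrA.
Qed.

Lemma deg_leXQ : deg_le 1 XQ.
Proof. by rewrite -[1%N]add0n; apply: deg_leM; [apply: deg_leC | apply: deg_leD; [apply: deg_leZ|apply: deg_leY]]. Qed.
Lemma deg_leYQ : deg_le 1 YQ.
Proof. by rewrite -[1%N]add0n; apply: deg_leM; [apply: deg_leC | apply: deg_leB; [apply: deg_leY|apply: deg_leZ]]. Qed.

Lemma topZ : top 1 ZQ = 1.
Proof. by rewrite /top /ZQ coefC /= coefX. Qed.
Lemma topY : top 1 YbQ = 0.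
Proof. by rewrite /top /YbQ coefX /= coef0. Qed.
Lemma topXQ : top 1 XQ = 2^-1.
Proof. by rewrite /XQ topCM topD topZ topY addr0 mulr1. Qed.
Lemma topYQ : top 1 YQ = - (2^-1 * 'i%C).
Proof. by rewrite /YQ topCM topB topZ topY sub0r mulrN1. Qed.

Lemma natPP (j : nat) : (j%:R : PP) = (j%:R : C)%:P%:P.
Proof. by rewrite !rmorph_nat. Qed.

Definition GH (r j : nat) : PP := YQ - j%:R * XQ - (minn j r.-1)%:R.
Definition FQ (cs : seq nat) : PP := \prod_(c <- cs) (XQ - c%:R).
Definition HQ (n r : nat) : PP := \prod_(j <- iota 0 n) GH r j.
Definition QQ (cs : seq nat) (n r : nat) (lam : C) : PP :=
  FQ cs + ('i%C * lam)%:P%:P * HQ n r.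

Lemma deg_le_GH r j : deg_le 1 (GH r j).
Proof.
apply: deg_leB; last by apply: (deg_le_mono _ (deg_le_nat _)).
apply: deg_leB; first exact: deg_leYQ.
by rewrite -[1%N]add0n natPP; apply: deg_leM; [apply: deg_leC|apply: deg_leXQ].
Qed.

Lemma top_GH r j : top 1 (GH r j) = - (2^-1 * 'i%C) - j%:R * 2^-1.
Proof.
rewrite /GH !topB topYQ natPP topCM topXQ.
by rewrite [top 1 _]deg_le_nat // subr0.
Qed.

Lemma top_GH_neq0 r j : top 1 (GH r j) != 0.
Proof.
rewrite top_GH; apply/negP => /eqP h.
have : 'i%C + j%:R = 0 :> C.
  have -> : 'i%C + j%:R = -(2%:R) * (-(2^-1 * 'i%C) - j%:R * 2^-1) :> C.
    by field.
  by rewrite h mulr0.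
move/(congr1 (@complex.Im _)).
rewrite raddfD /= raddfMn /= mul0rn addr0 => h1.
by move: (@oner_neq0 Rdefinitions.R); rewrite h1 eqxx.
Qed.

Notation RR := Rdefinitions.R.
Lemma evB z p q : ev z (p - q) = ev z p - ev z q.
Proof. by rewrite /ev rmorphB. Qed.
Lemma evD z p q : ev z (p + q) = ev z p + ev z q.
Proof. by rewrite /ev rmorphD. Qed.
Lemma evnat z j : ev z (j%:R) = j%:R.
Proof. by rewrite /ev rmorph_nat. Qed.

Lemma deg_le_FQ cs : deg_le (size cs) (FQ cs).
Proof.
have [] := @deg_le_prod cs (fun c => XQ - c%:R) => // c.
by apply: deg_leB; [apply: deg_leXQ | apply: (deg_le_mono _ (deg_le_nat _))].
Qed.

Lemma deg_le_HQ n r : deg_le n (HQ n r) /\ top n (HQ n r) != 0.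
Proof.
have [h1 h2] := @deg_le_prod (iota 0 n) (GH r) (deg_le_GH r).
rewrite size_iota in h1 h2; split => //; rewrite /HQ h2.
by rewrite prodf_seq_neq0; apply/allP => j _; apply: top_GH_neq0.
Qed.

Lemma ev_FQ z cs :
  ev z (FQ cs) = (\prod_(c <- cs) (complex.Re z - c%:R : RR))%:C%C.
Proof.
rewrite /FQ /ev rmorph_prod rmorph_prod; apply: eq_bigr => c _.
by rewrite !rmorphB /= -/(ev z _) evXQ !rmorph_nat.
Qed.

Lemma ev_HQ z n r :
  ev z (HQ n r) = (\prod_(j <- iota 0 n)
     (complex.Im z - j%:R * complex.Re z - (minn j r.-1)%:R : RR))%:C%C.
Proof.
rewrite /HQ /ev rmorph_prod rmorph_prod; apply: eq_bigr => j _.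
rewrite [LHS](_ : _ = ev z (GH r j)) //.
by rewrite /GH !evB evM evXQ evYQ !evnat !rmorphB rmorphM /= !rmorph_nat.
Qed.

Lemma cplx0 (a b : RR) :
  ((a%:C)%C + 'i%C * (b%:C)%C = 0 :> C) <-> (a = 0 /\ b = 0).
Proof.
split; last by case=> -> ->; rewrite !rmorph0 mulr0 addr0.
rewrite [_ * _]mulrC => h; split.
  by have := congr1 (@complex.Re _) h; rewrite raddfD /= mulr0 mul0r subr0 addr0.
by have := congr1 (@complex.Im _) h; rewrite raddfD /= mulr1 mul0r addr0 add0r.
Qed.

Lemma ev_QQ z cs n r (l : nat) : (0 < l)%N ->
  (ev z (QQ cs n r l%:R) = 0) <->
  ((\prod_(c <- cs) (complex.Re z - c%:R : RR)) = 0 /\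
   (\prod_(j <- iota 0 n)
     (complex.Im z - j%:R * complex.Re z - (minn j r.-1)%:R : RR)) = 0).
Proof.
move=> hl; rewrite /QQ evD evM evC ev_FQ ev_HQ.
rewrite -mulrA -[(l%:R : C)](rmorph_nat (real_complex RR)) -rmorphM cplx0.
split => -[hA hB]; split => //; last by rewrite hB mulr0.
move/eqP: hB; rewrite mulf_eq0 pnatr_eq0; case: eqP => [hl0|_] /=; [lia | by move/eqP].
Qed.

Lemma good_lam cs n r : (size cs <= n)%N ->
  exists l, (0 < l)%N /\ polyanalytic_of_degree n (fun z => ev z (QQ cs n r l%:R)).
Proof.
move=> hs; have [hH hHt] := deg_le_HQ n r.
have hdeg l : deg_le n (QQ cs n r l).
  apply: deg_leD; first by apply: (deg_le_mono hs); apply: deg_le_FQ.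
  by rewrite -[n]add0n; apply: deg_leM => //; apply: deg_leC.
have htop l : top n (QQ cs n r l) = top n (FQ cs) + 'i%C * l * top n (HQ n r).
  by rewrite /QQ topD topCM.
have hi : 'i%C != 0 :> C.
  apply/negP => /eqP /(congr1 (@complex.Im _)) /= h.
  by move: (@oner_neq0 RR); rewrite h eqxx.
case: (boolP (top n (QQ cs n r 1%:R) == 0)) => h1; last first.
  by exists 1%N; split => //; apply: polyan_of.
exists 2%N; split => //; apply: polyan_of => //.
apply/negP => h2; move: h1 h2; rewrite !htop => /eqP h1 /eqP h2.
have : 'i%C * top n (HQ n r) = 0.
  have -> : 'i%C * top n (HQ n r) =
     (top n (FQ cs) + 'i%C * 2%:R * top n (HQ n r)) -
     (top n (FQ cs) + 'i%C * 1%:R * top n (HQ n r)) by ring.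
  by rewrite h1 h2 subrr.
by move/eqP; rewrite mulf_eq0 (negbTE hi) (negbTE hHt).
Qed.

Lemma prod0P (s : seq nat) (F : nat -> RR) :
  (\prod_(c <- s) F c = 0) <-> exists2 c, c \in s & F c = 0.
Proof.
split.
  by move/eqP; rewrite prodf_seq_eq0 => /hasP [c hc /= /eqP h]; exists c.
move=> [c hc hF].
apply/eqP; rewrite prodf_seq_eq0; apply/hasP; exists c; [done | by rewrite /= hF].
Qed.

Lemma inj_aux c t j j' : (0 < c)%N ->
  (j * c + minn j t = j' * c + minn j' t)%N -> j = j'.
Proof.
move=> hc; case: (ltngtP j j') => // h.
  have : (j * c < j' * c)%N by rewrite ltn_pmul2r.
  lia.
have : (j' * c < j * c)%N by rewrite ltn_pmul2r.
lia.
Qed.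

Definition cs_of q r : seq nat := nseq (0 < r)%N 0%N ++ map S (iota 0 q).
Definition s_of n q r : seq C :=
  [seq Complex (c%:R : RR) ((j * c + minn j r.-1)%:R) | c <- map S (iota 0 q), j <- iota 0 n]
  ++ [seq Complex (0 : RR) (j%:R) | j <- iota 0 r].

Lemma s_of_uniq n q r : uniq (s_of n q r).
Proof.
rewrite cat_uniq; apply/and3P; split.
- apply: allpairs_uniq.
  + by rewrite map_inj_uniq ?iota_uniq //; move=> x y [].
  + exact: iota_uniq.
  move=> [c j] [c' j'] /allpairsP [[c1 j1] /= [hc1 _ [-> ->]]].
  move=> /allpairsP [[c2 j2] /= [hc2 _ [-> ->]]] /= [e1 e2].
  move/eqP: e1; rewrite eqr_nat => /eqP e1; subst c2.
  move/eqP: e2; rewrite eqr_nat => /eqP e2.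
  move: hc1 => /mapP [i _ hi]; subst c1; congr pair; exact: (inj_aux (ltn0Sn i) e2).
- apply/hasPn => w /mapP [j' _ ->]; apply/negP => /allpairsP [[c j] /= [hc _ [e _]]].
  move: hc => /mapP [i _ hi]; subst c.
  by move/eqP: e; rewrite eq_sym pnatr_eq0.
- rewrite map_inj_uniq ?iota_uniq // => x y [e]; move/eqP: e.
  by rewrite eqr_nat => /eqP.
Qed.

Lemma s_of_size n q r : size (s_of n q r) = (q * n + r)%N.
Proof. by rewrite size_cat size_allpairs !size_map !size_iota. Qed.

Lemma s_of_mem n q r (z : C) : (r < n)%N ->
  ((\prod_(c <- cs_of q r) (complex.Re z - c%:R : RR)) = 0 /\
   (\prod_(j <- iota 0 n)
     (complex.Im z - j%:R * complex.Re z - (minn j r.-1)%:R : RR)) = 0)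
  <-> z \in s_of n q r.
Proof.
move=> hrn; case: z => a b /=; rewrite !prod0P; split.
  move=> [[c hc ea] [j hj eb]].
  have ea' : a = c%:R by apply/eqP; rewrite -subr_eq0 ea.
  have eb' : b = j%:R * a + (minn j r.-1)%:R.
    by apply/eqP; rewrite -subr_eq0 opprD addrA eb.
  move: hc; rewrite mem_cat mem_nseq => /orP [/andP [hr /eqP hc0]|hc].
    subst c; rewrite mem_cat; apply/orP; right.
    rewrite eb' ea' mulr0 add0r; apply: map_f.
    by rewrite mem_iota; lia.
  rewrite mem_cat; apply/orP; left; rewrite eb' ea' -natrM -natrD.
  by apply: allpairs_f.
rewrite mem_cat => /orP [/allpairsP [[c j] /= [hc hj [-> ->]]]|/mapP [j hj [-> ->]]].
  split.
    by exists c; [rewrite mem_cat hc orbT | rewrite subrr].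
  by exists j => //; rewrite natrD natrM; ring.
move: hj; rewrite mem_iota => /andP [_ hj].
split.
  by exists 0%N; [rewrite mem_cat mem_nseq; apply/orP; left; apply/andP; split => //; lia | rewrite subrr].
exists j; first by rewrite mem_iota; lia.
have -> : minn j r.-1 = j by lia.
by rewrite mulr0 subr0 subrr.
Qed.

Lemma le_sum_abs (s : seq C) w : w \in s ->
  `|complex.Im w| <= \sum_(v <- s) `|complex.Im v|.
Proof.
elim: s => // x s IH; rewrite in_cons big_cons => /orP [/eqP ->|h].
  by rewrite lerDl sumr_ge0.
by apply: (le_trans (IH h)); rewrite lerDr.
Qed.

Lemma infinite_part n : (1 <= n)%N ->
  exists P : C -> C, polyanalytic_of_degree n P /\ has_infinitely_many_zeros P.
Proof.
move=> hn; have [h1 h2] := @deg_le_prod (iota 0 n) (fun _ => XQ) (fun _ => deg_leXQ).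
rewrite size_iota in h1 h2.
exists (fun z => ev z (\prod_(j <- iota 0 n) XQ)); split.
  apply: polyan_of => //; rewrite h2 prodf_seq_neq0; apply/allP => j _.
  by rewrite topXQ invr_eq0 pnatr_eq0.
move=> s; exists (Complex (0 : RR) (1 + \sum_(v <- s) `|complex.Im v|)); split.
  rewrite /ev rmorph_prod; case: n hn {h1 h2} => // n _.
  by rewrite /= big_cons -/(ev _ XQ) evXQ /= rmorph0 mul0r.
apply/negP => /le_sum_abs /=; set S := \sum_(v <- s) _ => h.
have hS : 0 <= S by apply: sumr_ge0.
move: h; rewrite ger0_norm; last by rewrite addr_ge0.
by rewrite gerDr ler10.
Qed.

Theorem theorem2p16 (n : nat) (hn : (1 <= n)%N) :
  (forall k : nat, (k <= n ^ 2)%N ->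
     exists P : C -> C, polyanalytic_of_degree n P /\ has_exactly_zeros P k) /\
  (exists P : C -> C, polyanalytic_of_degree n P /\ has_infinitely_many_zeros P).
Proof.
split; last exact: infinite_part.
move=> k hk.
have hr : (k %% n < n)%N by rewrite ltn_pmod.
have hkq := divn_eq k n.
have hsize : (size (cs_of (k %/ n) (k %% n)) <= n)%N.
  rewrite size_cat size_nseq size_map size_iota.
  case: (posnP (k %% n)) => hr0.
    rewrite add0n -(leq_pmul2r hn).
    by move: hk; rewrite {1}hkq hr0 addn0 expnS expn1.
  rewrite add1n -(ltn_pmul2r hn).
  by move: hk; rewrite {1}hkq expnS expn1; lia.
have [l [hl hP]] := good_lam (k %% n) hsize.
exists (fun z => ev z (QQ (cs_of (k %/ n) (k %% n)) n (k %% n) l%:R)); split => //.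
exists (s_of n (k %/ n) (k %% n)); split; first exact: s_of_uniq.
split; first by rewrite s_of_size -hkq.
move=> z; rewrite ev_QQ //; exact: s_of_mem.
Qed.
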